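(* Every unary FA-presentable partial order $(X,\le)$ decomposes as a finite disjoint union of trivial partial orders, countably infinite ascending chains, countably infinite descending chains, and countably infinite anti-chains; that is, $X$ can be partitioned into finitely many subsets, each of which, with the induced order, is either a one-element partial order, or a countably infinite set $\{x_1,x_2,\dots\}$ with $x_i\le x_j$ iff $i\le j$, or one with $x_i\le x_j$ iff $i\ge j$, or a countably infinite anti-chain.
   Context: A structure $(X,\le)$ is unary FA-presentable if there exist a regular language $L\subseteq a^*$ over a one-letter alphabet and a surjection $\phi:L\to X$ such that $\{(u,v)\in L^2: u\phi=v\phi\}$ and $\{(u,v)\in L^2:u\phi\le v\phi\}$ are regular relations, i.e. the corresponding sets of words $\mathrm{conv}(u,v)$ over $\{a,\$\}^2$ (reading $u,v$ in parallel, padding the shorter with $\$$) are regular languages. *)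

(* Defs.v *)
From mathcomp Require Import all_boot.
Set Implicit Arguments. Unset Strict Implicit. Unset Printing Implicit Defensive.

Record dfa (A : finType) := DFA {
  dstate : finType;
  dstart : dstate;
  dtrans : dstate -> A -> dstate;
  dfinal : pred dstate }.

Definition dfa_accepts (A : finType) (M : dfa A) (w : seq A) : bool :=
  @dfinal A M (foldl (@dtrans A M) (@dstart A M) w).

Definition regular (A : finType) (P : seq A -> Prop) : Prop :=
  exists M : dfa A, forall w, P w <-> dfa_accepts M w.

(* Unary words a^n are identified with n; the one-letter alphabet is unit. *)
Definition unary_regular (L : nat -> Prop) : Prop :=
  regular (fun w : seq unit => L (size w)).

(* conv(a^m, a^n) over {a,$}^2: letter true = a, false = $ (padding). *)
Definition conv (m n : nat) : seq (bool * bool) :=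
  mkseq (fun i => (i < m, i < n)) (maxn m n).

Definition regular_rel (R : nat -> nat -> Prop) : Prop :=
  regular (fun w => exists m n, R m n /\ w = conv m n).

Definition partial_order (X : Type) (le : X -> X -> Prop) : Prop :=
  (forall x, le x x) /\
  (forall x y, le x y -> le y x -> x = y) /\
  (forall x y z, le x y -> le y z -> le x z).

Definition unary_FA_presentable (X : Type) (le : X -> X -> Prop) : Prop :=
  exists (L : nat -> Prop) (phi : nat -> X),
    unary_regular L /\
    (forall x, exists n, L n /\ phi n = x) /\
    regular_rel (fun m n => L m /\ L n /\ phi m = phi n) /\
    regular_rel (fun m n => L m /\ L n /\ le (phi m) (phi n)).

Definition trivial_block (X : Type) (B : X -> Prop) : Prop :=
  exists x, forall y, B y <-> y = x.

Definition enumerates (X : Type) (B : X -> Prop) (f : nat -> X) : Prop :=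
  injective f /\ (forall i, B (f i)) /\ (forall x, B x -> exists i, f i = x).

Definition ascending_chain_block (X : Type) (le : X -> X -> Prop) (B : X -> Prop) :=
  exists f, enumerates B f /\ forall i j, le (f i) (f j) <-> i <= j.

Definition descending_chain_block (X : Type) (le : X -> X -> Prop) (B : X -> Prop) :=
  exists f, enumerates B f /\ forall i j, le (f i) (f j) <-> j <= i.

Definition antichain_block (X : Type) (le : X -> X -> Prop) (B : X -> Prop) :=
  exists f, enumerates B f /\ forall i j, le (f i) (f j) <-> i = j.

(* Main.v *)
Require Import Defs.
From mathcomp Require Import all_boot.
From mathcomp Require Import zify.
From Stdlib Require Import Classical ClassicalEpsilon FunctionalExtensionality PropExtensionality.

Set Implicit Arguments. Unset Strict Implicit. Unset Printing Implicit Defensive.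

Definition pb (P : Prop) : bool := if excluded_middle_informative P then true else false.
Lemma pbP (P : Prop) : reflect P (pb P).
Proof. rewrite /pb; case: excluded_middle_informative => h; constructor => //. Qed.

Lemma iter_period (S : finType) (f : S -> S) (s : S) :
  exists i p, [/\ 0 < p <= #|S|, i <= #|S| & iter (i + p) f s = iter i f s].
Proof.
apply: NNPP => hne.
pose g (i : 'I_(#|S|.+1)) := iter i f s.
have ginj : injective g.
  move=> i j hij; apply: val_inj => /=.
  have hi := ltn_ord i; have hj := ltn_ord j.
  case: (ltngtP i j) => // hlt; exfalso; apply: hne.
  - exists i, (j - i); split; [lia|lia|].
    by rewrite subnKC ?(ltnW hlt) //; rewrite /g in hij; rewrite hij.
  - exists j, (i - j); split; [lia|lia|].
    by rewrite subnKC ?(ltnW hlt) //; rewrite /g in hij; rewrite hij.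
have := @leq_card _ _ g ginj; rewrite card_ord; lia.
Qed.

Lemma iter_periodic (S : finType) (f : S -> S) (s : S) (k M : nat) :
  #|S| <= k -> #|S|`! %| M -> iter (k + M) f s = iter k f s.
Proof.
move=> hk hM.
have [i [p [/andP [p0 pS] hiS hip]]] := iter_period f s.
have H1 : forall k', i <= k' -> iter (k' + p) f s = iter k' f s.
  move=> k' hk'; rewrite -(subnK hk') -addnA iterD hip.
  by rewrite -iterD.
have H2 : forall c k', i <= k' -> iter (k' + c * p) f s = iter k' f s.
  elim=> [|c IH] k' hk'; first by rewrite mul0n addn0.
  rewrite mulSnr addnA H1; first exact: IH.
  exact: leq_trans hk' (leq_addr _ _).
have hpM : p %| M by apply: dvdn_trans hM; apply: dvdn_fact; rewrite p0 pS.
rewrite -(divnK hpM) H2 //; exact: leq_trans hiS hk.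
Qed.

Lemma foldl_nseq (T A : Type) (f : T -> A -> T) s k a :
  foldl f s (nseq k a) = iter k (fun q => f q a) s.
Proof. by elim: k s => [|k IH] s //=; rewrite IH -iterSr. Qed.

Lemma conv_le m n : m <= n -> conv m n = nseq m (true,true) ++ nseq (n-m) (false,true).
Proof.
move=> hmn; apply: (@eq_from_nth _ (false,false)).
  by rewrite size_mkseq size_cat !size_nseq; lia.
move=> i; rewrite size_mkseq => hi.
rewrite nth_mkseq // nth_cat size_nseq.
case: (ltnP i m) => him; rewrite nth_nseq.
- by rewrite him (leq_trans him hmn).
- have h1 : i - m < n - m by lia.
  have h2 : i < n by lia.
  by rewrite h1 h2.
Qed.

Lemma conv_ge m n : n <= m -> conv m n = nseq n (true,true) ++ nseq (m-n) (true,false).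
Proof.
move=> hmn; apply: (@eq_from_nth _ (false,false)).
  by rewrite size_mkseq size_cat !size_nseq; lia.
move=> i; rewrite size_mkseq => hi.
rewrite nth_mkseq // nth_cat size_nseq.
case: (ltnP i n) => him; rewrite nth_nseq.
- by rewrite him (leq_trans him hmn).
- have h1 : i - n < m - n by lia.
  have h2 : i < m by lia.
  by rewrite h1 h2.
Qed.

Lemma count_conv m n : count fst (conv m n) = m /\ count snd (conv m n) = n.
Proof.
case: (leqP m n) => h.
  by rewrite (conv_le h) !count_cat !count_nseq /= !mul1n !mul0n addn0 subnKC.
by rewrite (conv_ge (ltnW h)) !count_cat !count_nseq /= !mul1n !mul0n addn0 subnKC // ltnW.
Qed.

Lemma conv_inj m n m' n' : conv m n = conv m' n' -> m = m' /\ n = n'.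
Proof.
move=> e; have [h1 h2] := count_conv m n; have [h3 h4] := count_conv m' n'.
by split; [rewrite -h1 -h3 e | rewrite -h2 -h4 e].
Qed.

Lemma acc_le (D : dfa (bool * bool)%type) m n : m <= n ->
  dfa_accepts D (conv m n) =
  @dfinal _ D (iter (n - m) (fun q => @dtrans _ D q (false,true))
     (iter m (fun q => @dtrans _ D q (true,true)) (@dstart _ D))).
Proof. by move=> h; rewrite /dfa_accepts conv_le // foldl_cat !foldl_nseq. Qed.

Lemma acc_ge (D : dfa (bool * bool)%type) m n : n <= m ->
  dfa_accepts D (conv m n) =
  @dfinal _ D (iter (m - n) (fun q => @dtrans _ D q (true,false))
     (iter n (fun q => @dtrans _ D q (true,true)) (@dstart _ D))).
Proof. by move=> h; rewrite /dfa_accepts conv_ge // foldl_cat !foldl_nseq. Qed.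

Definition shiftinv K M (P : nat -> nat -> Prop) :=
  (forall m n, K <= m -> K <= n -> (P m n <-> P (m + M) (n + M))) /\
  (forall m n, m + K <= n -> (P m n <-> P m (n + M))) /\
  (forall m n, m + K <= n -> (P n m <-> P (n + M) m)).

Lemma rel_shift P : regular_rel P ->
  exists N, 0 < N /\ forall K M, N <= K -> N`! %| M -> shiftinv K M P.
Proof.
move=> [D HD].
have Pacc : forall m n, P m n <-> dfa_accepts D (conv m n).
  move=> m n; split => [h|h]; first by apply/HD; exists m, n.
  have [m' [n' [h' e]]] := proj2 (HD _) h.
  by have [-> ->] := conv_inj e.
exists #|@dstate _ D|; split; first by apply/card_gt0P; exists (@dstart _ D).
move=> K M hK hM; split; [|split].
- move=> m n hm hn; rewrite !Pacc.
  case: (leqP m n) => h.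
  + rewrite !acc_le ?leq_add2r // subnDr (iter_periodic _ _ (leq_trans hK hm) hM) //.
  + have h' := ltnW h.
    rewrite !acc_ge ?leq_add2r // subnDr (iter_periodic _ _ (leq_trans hK hn) hM) //.
- move=> m n h; rewrite !Pacc.
  have h1 : m <= n by lia.
  have h2 : m <= n + M by lia.
  rewrite !acc_le // (_ : n + M - m = (n - m) + M); last by lia.
  rewrite (iter_periodic _ _ _ hM) //; lia.
- move=> m n h; rewrite !Pacc.
  have h1 : m <= n by lia.
  have h2 : m <= n + M by lia.
  rewrite !acc_ge // (_ : n + M - m = (n - m) + M); last by lia.
  rewrite (iter_periodic _ _ _ hM) //; lia.
Qed.

Lemma un_shift L : unary_regular L ->
  exists N, 0 < N /\ forall K M, N <= K -> N`! %| M ->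
    forall n, K <= n -> (L n <-> L (n + M)).
Proof.
move=> [D HD].
have Lacc : forall n, L n <-> @dfinal _ D (iter n (fun q => @dtrans _ D q tt) (@dstart _ D)).
  by move=> n; have := HD (nseq n tt); rewrite size_nseq /dfa_accepts foldl_nseq.
exists #|@dstate _ D|; split; first by apply/card_gt0P; exists (@dstart _ D).
move=> K M hK hM n hn; rewrite !Lacc (iter_periodic _ _ (leq_trans hK hn) hM) //.
Qed.

Lemma minw_ex (P : nat -> Prop) : (exists n, P n) -> exists n, pb (P n).
Proof. by case=> n h; exists n; apply/pbP. Qed.
Definition minw (P : nat -> Prop) (H : exists n, P n) : nat := ex_minn (minw_ex H).
Lemma minw_spec P (H : exists n, P n) : P (minw H) /\ forall n, P n -> minw H <= n.
Proof.
rewrite /minw; case: ex_minnP => m /pbP hm hmin; split => // n hn; apply: hmin; exact/pbP.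
Qed.

Lemma comb (X : Type) (le : X -> X -> Prop) (L : nat -> Prop) (phi : nat -> X) K M :
  partial_order le ->
  (forall x, exists n, L n /\ phi n = x) ->
  0 < K -> K <= M ->
  (forall n, K <= n -> (L n <-> L (n + M))) ->
  shiftinv K M (fun m n => L m /\ L n /\ phi m = phi n) ->
  shiftinv K M (fun m n => L m /\ L n /\ le (phi m) (phi n)) ->
  exists (k : nat) (part : X -> 'I_k),
    forall i : 'I_k,
      let B := fun x => part x = i in
      trivial_block B \/ ascending_chain_block le B \/
      descending_chain_block le B \/ antichain_block le B.
Proof.
move=> [Prefl [Pasym Ptrans]] surj K0 KM HL [E1 [E2 E3]] [R1 [R2 R3]].
have M0 : 0 < M by apply: leq_trans K0 KM.
pose mu x := minw (surj x).
have muL x : L (mu x) /\ phi (mu x) = x := (minw_spec (surj x)).1.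
have mumin x n : L n -> phi n = x -> mu x <= n.
  by move=> h1 h2; apply: (minw_spec (surj x)).2.
pose C n := L n /\ mu (phi n) = n.
have Cmu x : C (mu x).
  by split; [exact: (muL x).1 | rewrite (muL x).2].
have Cinj a b : C a -> C b -> phi a = phi b -> a = b.
  by move=> [_ ha] [_ hb] e; rewrite -ha -hb e.
have [B0 eB0] : exists B0, B0 = K + K + M by eexists.
have Cmono n : B0 <= n -> C n -> C (n + M).
  move=> hn [Ln hmu].
  have hKn : K <= n by lia.
  have LnM : L (n + M) := proj1 (HL n hKn) Ln.
  split => //.
  have [Lm pm] := muL (phi (n + M)).
  have hle := mumin _ _ LnM erefl.
  move: Lm pm hle; set m := mu (phi (n + M)) => Lm pm hle.
  case: (ltnP m (n + M)) => hlt; last by apply/eqP; rewrite eqn_leq hle hlt.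
  exfalso.
  have [m' [hm' Lm' em']] : exists m', [/\ m' < n, L m' & phi m' = phi n].
    case: (leqP (K + M) m) => hm.
    - exists (m - M).
      have h1 : K <= m - M by lia.
      have h2 : K <= n by lia.
      have := proj2 (E1 (m - M) n h1 h2); rewrite subnK; last by lia.
      move=> /(_ (conj Lm (conj LnM pm))) [Lm' [_ e]]; split => //; lia.
    - exists m.
      have h1 : m + K <= n by lia.
      have := proj2 (E2 m n h1) (conj Lm (conj LnM pm)).
      move=> [_ [_ e]]; split => //; lia.
  by have := mumin _ _ Lm' em'; rewrite hmu; lia.
pose bid x := if mu x < B0 then mu x else B0 + mu x %% M.
pose U := [seq b <- iota 0 (B0 + M) | pb (exists x, bid x = b)].
have bidU x : bid x \in U.
  rewrite mem_filter mem_iota /=; apply/andP; split; first by apply/pbP; exists x.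
  rewrite /bid; case: ifP => h; move: (ltn_pmod (mu x) M0); move: (mu x %% M) => r; lia.
have partP x : index (bid x) U < size U by rewrite index_mem bidU.
exists (size U), (fun x => Ordinal (partP x)) => i B.
have Uu : uniq U := filter_uniq _ (iota_uniq _ _).
set b := nth 0 U i.
have hB : B = (fun y => bid y = b).
  apply: functional_extensionality => y; apply: propositional_extensionality; rewrite /B; split.
  - by rewrite /b => /(congr1 val) /= <-; rewrite nth_index.
  - by move=> e; apply: val_inj => /=; rewrite e /b index_uniq.
rewrite hB.
have bU : b \in U := mem_nth 0 (ltn_ord i).
move: bU; rewrite mem_filter mem_iota => /andP [/pbP [x0 hx0] hbr].
clearbody b; clear hB B; clear i.
case: (ltnP b B0) => hb.
  left; exists x0 => y; split => [hy|->//].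
  have hm : forall z, bid z = b -> mu z = b.
    move=> z; rewrite /bid; case: ifP => // _ h; move: h; move: (mu z %% M) => r; lia.
  have e : mu y = mu x0 by rewrite !hm.
  by rewrite -(muL y).2 e (muL x0).2.
right.
have [r er] : exists r, r = b - B0 by eexists.
pose S n := [/\ B0 <= n, n %% M = r & C n].
have Sex : exists n, S n.
  exists (mu x0); move: hx0; rewrite /bid; case: ifP => h e.
    exfalso; lia.
  split; [lia| |exact: Cmu].
  by move: e; move: (mu x0 %% M) => q; lia.
have [[hn0 hn0r Cn0] n0min] := minw_spec Sex.
move: hn0 hn0r Cn0 n0min; move: (minw Sex) => n0 hn0 hn0r Cn0 n0min.
pose a j := n0 + j * M.
have aS j : a j.+1 = a j + M by rewrite /a mulSnr addnA.
have Sa j : S (a j).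
  elim: j => [|j IH]; first by rewrite /a mul0n addn0.
  rewrite aS; case: IH => h1 h2 h3; split; [lia| |exact: Cmono].
  by rewrite modnDr.
have Sinv n : S n -> exists j, n = a j.
  move=> [h1 h2 h3]; have hle := n0min n (And3 h1 h2 h3).
  exists (n %/ M - n0 %/ M); rewrite /a mulnBl.
  have e1 := divn_eq n M; have e2 := divn_eq n0 M.
  have hq : n0 %/ M * M <= n %/ M * M by rewrite leq_mul2r leq_div2r // orbT.
  move: e1 e2 hq; rewrite h2 hn0r; move: (n %/ M * M) (n0 %/ M * M) => q1 q2; lia.
have aK j : K <= a j by rewrite /a; lia.
have La j : L (a j) by case: (Sa j) => _ _ [].
have aG i d : a i + K <= a (i + d.+1).
  elim: d => [|d IH]; first by rewrite addn1 aS; lia.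
  by rewrite addnS aS; lia.
pose R m n := L m /\ L n /\ le (phi m) (phi n).
have K1 i d : R (a i) (a (i + d)) <-> R (a 0) (a d).
  elim: i => [|i IH] //; rewrite addSn !aS.
  apply: iff_trans _ IH; apply: iff_sym; exact: R1.
have K1' i d : R (a (i + d)) (a i) <-> R (a d) (a 0).
  elim: i => [|i IH] //; rewrite addSn !aS.
  apply: iff_trans _ IH; apply: iff_sym; exact: R1.
have K2 d : R (a 0) (a d.+1) <-> R (a 0) (a 1).
  elim: d => [|d IH] //; rewrite aS.
  apply: iff_trans _ IH; apply: iff_sym; apply: R2.
  by have := aG 0 d; rewrite add0n.
have K2' d : R (a d.+1) (a 0) <-> R (a 1) (a 0).
  elim: d => [|d IH] //; rewrite aS.
  apply: iff_trans _ IH; apply: iff_sym; apply: R3.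
  by have := aG 0 d; rewrite add0n.
have Rij i j : i < j -> (R (a i) (a j) <-> R (a 0) (a 1)).
  move=> h; rewrite -(subnKC (ltnW h)).
  apply: iff_trans (K1 _ _) _.
  case e: (j - i) => [|d]; first by exfalso; lia.
  exact: K2.
have Rji i j : i < j -> (R (a j) (a i) <-> R (a 1) (a 0)).
  move=> h; rewrite -(subnKC (ltnW h)).
  apply: iff_trans (K1' _ _) _.
  case e: (j - i) => [|d]; first by exfalso; lia.
  exact: K2'.
have Rii i : R (a i) (a i) by rewrite /R; split; [exact: La | split; [exact: La | exact: Prefl]].
have Ca j : C (a j) by case: (Sa j).
have notboth : ~ (R (a 0) (a 1) /\ R (a 1) (a 0)).
  move=> [[_ [_ h1]] [_ [_ h2]]].
  have := Cinj _ _ (Ca 0) (Ca 1) (Pasym _ _ h1 h2); rewrite aS; lia.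
pose f j := phi (a j).
have fR i j : le (f i) (f j) <-> R (a i) (a j).
  split => [h|[_ [_ h]]] //.
have Cenum : enumerates (fun y => bid y = b) f.
  split; [|split].
  - move=> i j /(Cinj _ _ (Ca i) (Ca j)) h.
    have : i * M = j * M by move: h; rewrite /a; lia.
    by move/eqP; rewrite eqn_pmul2r // => /eqP.
  - move=> j; rewrite /bid /f.
    have [hS1 hS2 [_ hS3]] := Sa j.
    rewrite hS3; case: ifP => h; first by exfalso; lia.
    by rewrite hS2; lia.
  - move=> y hy.
    have Sy : S (mu y).
      move: hy; rewrite /bid; case: ifP => h e; first by exfalso; lia.
      split; [lia| |exact: Cmu].
      by move: e; move: (mu y %% M) => q; lia.
    have [j hj] := Sinv _ Sy.
    by exists j; rewrite /f -hj (muL y).2.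
case: (classic (R (a 0) (a 1))) => hup; case: (classic (R (a 1) (a 0))) => hdn.
- by exfalso; apply: notboth.
- left; exists f; split => // i j; apply: iff_trans (fR i j) _.
  case: (ltngtP i j) => h.
  + by split => // _; apply/(Rij _ _ h).
  + by split => // hr; exfalso; apply: hdn; apply/(Rji _ _ h).
  + by subst j; split.
- right; left; exists f; split => // i j; apply: iff_trans (fR i j) _.
  case: (ltngtP j i) => h.
  + by split => // _; apply/(Rji _ _ h).
  + by split => // hr; exfalso; apply: hup; apply/(Rij _ _ h).
  + by subst j; split.
- right; right; exists f; split => // i j; apply: iff_trans (fR i j) _.
  case: (ltngtP i j) => h.
  + by split => // hr; [exfalso; apply: hup; apply/(Rij _ _ h) | lia].
  + by split => // hr; [exfalso; apply: hdn; apply/(Rji _ _ h) | lia].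
  + by subst j; split.
Qed.

Lemma fact_dvd m n : m <= n -> m`! %| n`!.
Proof.
move=> h; rewrite -(subnKC h); elim: (n - m) => [|d IH]; first by rewrite addn0.
by rewrite addnS factS dvdn_mull.
Qed.

Lemma fact_ge n : n <= n`!.
Proof. case: n => // n; rewrite factS; apply: leq_pmulr; exact: fact_gt0. Qed.

Theorem corollary5p11 (X : Type) (le : X -> X -> Prop) :
  partial_order le -> unary_FA_presentable le ->
  exists (k : nat) (part : X -> 'I_k),
    forall i : 'I_k,
      let B := fun x => part x = i in
      trivial_block B \/ ascending_chain_block le B \/
      descending_chain_block le B \/ antichain_block le B.
Proof.
move=> PO [L [phi [HL [surj [HE HR]]]]].
have [NL [NL0 HNL]] := un_shift HL.
have [NE [NE0 HNE]] := rel_shift HE.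
have [NR [NR0 HNR]] := rel_shift HR.
have [K eK] : exists K, K = NL + NE + NR by eexists.
apply: (@comb X le L phi K (K`!)) => //.
- lia.
- exact: fact_ge.
- by apply: HNL; [lia | apply: fact_dvd; lia].
- by apply: HNE; [lia | apply: fact_dvd; lia].
- by apply: HNR; [lia | apply: fact_dvd; lia].
Qed.
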